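(* Let $\rho(x)=1/\sqrt{1-(x/2)^2}$ for $x\in(-2,2)$, and let $F\in C_c(\mathbb{R})$ with $F\ge0$ and $F(x)\le F(y)$ whenever $|x|>|y|$. Then there exist constants $C$ and $n_0$ such that for all $n\ge n_0$, $$\sup_{|\mu|<2}\int_{-2}^{2}F\bigl(n\rho(x)(x-\mu)\bigr)\rho(x)\,dx\le\frac Cn.$$ *)

(* Defs.v *)
From HB Require Import structures.
From mathcomp Require Import all_boot all_order all_algebra.
From mathcomp Require Import all_classical all_reals all_analysis.
Set Implicit Arguments. Unset Strict Implicit. Unset Printing Implicit Defensive.
Import Order.TTheory GRing.Theory Num.Theory.
Import numFieldNormedType.Exports.
Local Open Scope classical_set_scope.
Local Open Scope ring_scope.

Definition rho (R : realType) (x : R) : R := (Num.sqrt (1 - (x / 2) ^+ 2))^-1.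

Definition compact_support (R : realType) (F : R -> R) : Prop :=
  compact (closure [set x | F x != 0]).

(* Main.v *)
Require Import Defs.
From HB Require Import structures.
From mathcomp Require Import all_boot all_order all_algebra.
From mathcomp Require Import all_classical all_reals all_analysis.
From mathcomp Require Import measurable_realfun.
From mathcomp Require Import ring lra.
Import Order.TTheory GRing.Theory Num.Theory.
Import numFieldNormedType.Exports.
Local Open Scope classical_set_scope.
Local Open Scope ring_scope.

Section T.
Context {R : realType}.

Lemma sin_ge_half (y : R) : 0 <= y <= pi / 2 -> y / 2 <= sin y.
Proof.
move=> /andP[y0 ypi].
have [->|yp] := eqVneq y 0; first by rewrite sin0 mul0r.
have y0' : 0 < y by rewrite lt_neqAle eq_sym yp y0.
have pi0 := pi_gt0 R.
have [c cI Hc] : exists2 c, c \in `]0, y / 2[ & sin (y/2) - sin 0 = cos c * (y/2 - 0).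
  apply: (@MVT R sin cos); first by lra.
  by apply: continuous_subspaceT => x; exact: continuous_sin.
move: cI; rewrite in_itv /= => /andP[c0 cy].
have hc : cos (y/2) <= cos c.
  rewrite leNgt ltr_cos ?in_itv /=; first by rewrite -leNgt ltW.
    by apply/andP; split; lra.
  by apply/andP; split; lra.
have cy2 : 0 <= cos (y/2) by apply: cos_ge0_pihalf; apply/andP; split; lra.
have cyp : 0 <= cos y by apply: cos_ge0_pihalf; apply/andP; split; lra.
have e1 : sin y = 2 * sin (y/2) * cos (y/2).
  by rewrite {1}(splitr y) sinD; ring.
have e2 : cos y = 2 * cos (y/2) ^+ 2 - 1.
  rewrite {1}(splitr y) cosD.
  by have := cos2Dsin2 (y/2); rewrite !expr2 => H; nra.
rewrite sin0 subr0 in Hc.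
have h1 : y / 2 * cos (y / 2) <= sin (y/2) by rewrite Hc; nra.
rewrite e1. nra.
Qed.

Lemma abs_sin_ge (h : R) : -(pi/2) <= h <= pi/2 -> `|h| / 2 <= `|sin h|.
Proof.
move=> /andP[h1 h2].
have [h0|h0] := leP 0 h.
  rewrite !ger0_norm //; first by apply: sin_ge_half; rewrite h0.
  by apply: sin_ge0_pi; rewrite h0 /=; have := pi_gt0 R; lra.
have := @sin_ge_half (- h); rewrite sinN => H.
rewrite ltr0_norm // -normrN ger0_norm; first by apply: H; apply/andP; lra.
have : 0 <= - h / 2 by lra.
move=> H2; apply: le_trans H2 _; apply: H; apply/andP; lra.
Qed.

Lemma key_trig (t f : R) : -(pi/2) < t < pi/2 -> -(pi/2) < f < pi/2 ->
  cos t * `|t - f| <= 4 * `|sin t - sin f|.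
Proof.
move=> /andP[t1 t2] /andP[f1 f2].
set m := (t + f) / 2; set h := (f - t) / 2.
have et : t = m - h by rewrite /m /h; field.
have ef : f = m + h by rewrite /m /h; field.
have eD : sin t - sin f = - (2 * cos m * sin h).
  by rewrite et ef sinB sinD; ring.
have eC : cos t + cos f = 2 * cos m * cos h.
  by rewrite et ef cosB cosD; ring.
have cm : 0 <= cos m by apply: cos_ge0_pihalf; apply/andP; rewrite /m; lra.
have ct : 0 <= cos t by apply: cos_ge0_pihalf; apply/andP; lra.
have cf : 0 <= cos f by apply: cos_ge0_pihalf; apply/andP; lra.
have ch := cos_le1 h.
have hs : `|h| / 2 <= `|sin h| by apply: abs_sin_ge; apply/andP; rewrite /h; lra.
have etf : `|t - f| = 2 * `|h|.
  by rewrite distrC -[2]ger0_norm // -normrM /h; congr `|_|; field.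
rewrite eD normrN !normrM (ger0_norm cm) ger0_norm // etf.
have : 2 * cos m >= cos t by nra.
have := normr_ge0 h; have := normr_ge0 (sin h).
nra.
Qed.
Lemma is_derive_lin (g : R -> R) (dg c y : R) :
  is_derive (c * y) 1 g dg -> is_derive y 1 (fun z => g (c * z)) (c * dg).
Proof.
move=> Hg.
have dh : is_derive y 1 (c \*: (@id R)) (c *: (1:R)) by exact: is_deriveZ.
have e : (fun z => g (c * z)) = g \o (c \*: (@id R)) by [].
rewrite e.
have dfy : derivable (c \*: (@id R)) y 1 := @ex_derive _ _ _ _ _ _ _ dh.
have dgy : derivable g ((c \*: (@id R)) y) 1 := @ex_derive _ _ _ _ _ _ _ Hg.
have dc : derivable (g \o (c \*: (@id R))) y 1.
  apply/derivable1_diffP; apply: differentiable_comp; exact/derivable1_diffP.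
apply: (is_derive_eq (derivableP dc)).
have := @derive1_comp R (c \*: (@id R)) g y dfy dgy.
rewrite !derive1E => ->.
rewrite (@derive_val _ _ _ _ _ _ _ dh).
have -> : 'D_1 g ((c \*: (@id R)) y) = dg := @derive_val _ _ _ _ _ _ _ Hg.
by rewrite /GRing.scale /= mulr1 mulrC.
Qed.

Lemma Phi_derive (M y : R) : -2 < y < 2 ->
  is_derive y 1 (fun y => 2 * M * asin (y / 2)) (M * rho y).
Proof.
move=> /andP[y1 y2].
have hy : -1 < 2^-1 * y < 1 by apply/andP; split; lra.
have da := is_derive1_asin hy.
have dg : is_derive (2^-1 * y) 1 ((2 * M) \*: (@asin R)) ((2 * M) *: (Num.sqrt (1 - (2^-1 * y) ^+ 2))^-1).
  exact: is_deriveZ.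
have := @is_derive_lin _ _ _ _ dg.
have -> : (fun z => ((2 * M) \*: (@asin R)) (2^-1 * z)) = (fun y => 2 * M * asin (y / 2)).
  by apply: funext => z /=; congr (_ * asin _); exact: mulrC.
move=> H; apply: (is_derive_eq H).
rewrite /rho /GRing.scale /= (mulrC 2^-1 y); field.
by rewrite gt_eqF // sqrtr_gt0 subr_gt0 expr2; nra.
Qed.

Lemma sqrt_pos (y : R) : -2 < y < 2 -> 0 < Num.sqrt (1 - (y / 2) ^+ 2).
Proof. by move=> /andP[y1 y2]; rewrite sqrtr_gt0 subr_gt0 expr2; nra. Qed.

Lemma rho_cont (y : R) : -2 < y < 2 -> {for y, continuous (@rho R)}.
Proof.
move=> hy; apply: continuousV; first by rewrite gt_eqF // sqrt_pos.
apply: continuous_comp; last exact: sqrt_continuous.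
apply: cvgB; first exact: cvg_cst.
under eq_fun do rewrite expr2.
by apply: cvgM; apply: cvgM; (exact: cvg_id || exact: cvg_cst).
Qed.

Lemma int_rho (M p q : R) : -2 < p -> p < q -> q < 2 ->
  (\int[@lebesgue_measure R]_(x in `[p, q]) (M * rho x)%:E =
   (2 * M * asin (q / 2))%:E - (2 * M * asin (p / 2))%:E)%E.
Proof.
move=> p2 pq q2.
have Hd (y : R) : -2 < y < 2 -> is_derive y 1 (fun y => 2 * M * asin (y / 2)) (M * rho y).
  exact: Phi_derive.
have Hc (y : R) : -2 < y < 2 -> {for y, continuous (fun z : R => 2 * M * asin (z / 2))}.
  move=> hy; apply: differentiable_continuous; apply/derivable1_diffP.
  exact: (@ex_derive _ _ _ _ _ _ _ (Hd y hy)).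
apply: (@continuous_FTC2 R (fun x => M * rho x) (fun z : R => 2 * M * asin (z / 2))) => //.
- apply: continuous_in_subspaceT => y; rewrite inE /= in_itv /= => /andP[py yq].
  apply: continuousM; first exact: cvg_cst.
  by apply: rho_cont; apply/andP; split; lra.
- split.
  + move=> y; rewrite in_itv /= => /andP[py yq].
    by apply: (@ex_derive _ _ _ _ _ _ _ (Hd y _)); apply/andP; split; lra.
  + by apply: cvg_at_right_filter; apply: Hc; apply/andP; split; lra.
  + by apply: cvg_at_left_filter; apply: Hc; apply/andP; split; lra.
- move=> y; rewrite in_itv /= => /andP[py yq].
  rewrite derive1E; apply: (@derive_val _ _ _ _ _ _ _ (Hd y _)).
  by apply/andP; split; lra.
Qed.

Lemma sin_le (a b : R) : -(pi/2) <= a -> a <= b -> b <= pi/2 -> sin a <= sin b.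
Proof.
move=> h1 h2 h3; have pi0 := pi_gt0 R.
rewrite leNgt ltr_sin ?in_itv /= -?leNgt //; apply/andP; split; lra.
Qed.



Lemma asin_mono (u v : R) : -1 <= u -> u <= v -> v <= 1 -> asin u <= asin v.
Proof.
move=> h1 h2 h3.
have Hu : -1 <= u <= 1 by apply/andP; split; lra.
have Hv : -1 <= v <= 1 by apply/andP; split; lra.
rewrite leNgt; apply/negP => H.
have Hs : sin (asin v) < sin (asin u).
  rewrite ltr_sin // in_itv /= ?asin_geNpi2 ?asin_lepi2 //.
rewrite !asinK ?in_itv // in Hs; lra.
Qed.

Lemma sin_bounds (b : R) : -(pi/2) < b < pi/2 -> -1 < sin b < 1.
Proof.
move=> /andP[h1 h2]; have pi0 := pi_gt0 R.
have I1 : (-(pi/2 : R)) \in `[(-(pi/2)), pi/2] by rewrite in_itv /=; apply/andP; split; lra.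
have I2 : (pi/2 : R) \in `[(-(pi/2)), pi/2] by rewrite in_itv /=; apply/andP; split; lra.
have Ib : b \in `[(-(pi/2)), pi/2] by rewrite in_itv /=; apply/andP; split; lra.
apply/andP; split.
  by have e := sinN (pi/2 : R); rewrite sin_pihalf in e; rewrite -e ltr_sin.
by rewrite -sin_pihalf ltr_sin.
Qed.

Lemma sqr_sq (y : R) : -2 < y < 2 -> Num.sqrt (1 - (y / 2) ^+ 2) ^+ 2 = 1 - (y/2) ^+ 2.
Proof.
move=> /andP[y1 y2]; rewrite sqr_sqrtr // subr_ge0 expr2.
have h : 0 <= (1 - y/2) * (1 + y/2) by apply: mulr_ge0; lra.
lra. Qed.

Lemma claim_pt (a mu x : R) : 0 < a -> -2 < mu < 2 -> -2 < x < 2 ->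
  `|x - mu| <= a * Num.sqrt (1 - (x / 2) ^+ 2) ->
  `|asin (x / 2) - asin (mu / 2)| <= 2 * a /\
  Num.min (Num.sqrt (1 - (mu / 2) ^+ 2) / 2)
          (3 * Num.sqrt (1 - (mu / 2) ^+ 2) ^+ 2 / (4 * a))
   <= Num.sqrt (1 - (x / 2) ^+ 2).
Proof.
move=> a0 hmu hx hw.
have cu0 := sqrt_pos x hx; have cv0 := sqrt_pos mu hmu.
have cu2 := sqr_sq x hx; have cv2 := sqr_sq mu hmu.
set cu := Num.sqrt (1 - (x / 2) ^+ 2) in cu0 cu2 hw *.
set cv := Num.sqrt (1 - (mu / 2) ^+ 2) in cv0 cv2 *.
split.
  move: hx hmu => /andP[x1 x2] /andP[m1 m2].
  have hxi : -1 <= x / 2 <= 1 by apply/andP; split; lra.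
  have hmi : -1 <= mu / 2 <= 1 by apply/andP; split; lra.
  have ht : -(pi/2) < asin (x/2) < pi/2.
    by apply/andP; split; [apply: asin_gtNpi2 | apply: asin_ltpi2]; apply/andP; split; lra.
  have hf : -(pi/2) < asin (mu/2) < pi/2.
    by apply/andP; split; [apply: asin_gtNpi2 | apply: asin_ltpi2]; apply/andP; split; lra.
  have := @key_trig _ _ ht hf.
  rewrite cos_asin // !asinK ?in_itv //= -/cu.
  have -> : x / 2 - mu / 2 = (x - mu) / 2 by rewrite mulrBl.
  rewrite normrM (ger0_norm (_ : 0 <= 2^-1 :> R)) ?invr_ge0 //.
  move=> H.
  have H2 : cu * `|asin (x / 2) - asin (mu / 2)| <= cu * (2 * a) by lra.
  by rewrite ler_pM2l in H2.
move: hx hmu => /andP[x1 x2] /andP[m1 m2].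
rewrite ge_min; apply/orP.
have [h|h] := leP (cv / 2) cu; [by left | right].
rewrite ler_pdivrMr; last by lra.
have w1 : x - mu <= `|x - mu| by apply: ler_norm.
have w2 : mu - x <= `|x - mu| by rewrite distrC; apply: ler_norm.
have h1 : (x - mu) * (x + mu) <= 4 * `|x - mu| by nra.
have h2 : cu ^+ 2 < cv ^+ 2 / 4 by nra.
nra.
Qed.
End T.

Lemma cont_meas (R : realType) (f : R -> R) (p q : R) : -2 < p -> q < 2 ->
  (forall x : R, -2 < x < 2 -> {for x, continuous f}) ->
  measurable_fun `[p, q] (EFin \o f).
Proof.
move=> p2 q2 H; apply/measurable_EFinP.
apply: subspace_continuous_measurable_fun; first exact: measurable_itv.
apply: continuous_in_subspaceT => x; rewrite inE /= in_itv /= => /andP[px xq].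
by apply: H; apply/andP; split; lra.
Qed.

Theorem lemma15 (R : realType) (F : R -> R)
  (Fcont : continuous F) (Fcs : compact_support F)
  (Fge0 : forall x, 0 <= F x)
  (Fmono : forall x y, `|y| < `|x| -> F x <= F y) :
  exists (C : R) (n0 : nat), forall n : nat, (n0 <= n)%N ->
    forall mu : R, `|mu| < 2 ->
      ((\int[@lebesgue_measure R]_(x in `](-2 : R)%R, (2 : R)%R[%classic)
          ((F (n%:R * rho x * (x - mu)) * rho x)%R)%:E) <= ((C / n%:R)%R)%:E)%E.
Proof.
have [K0 [_ HK0]] := compact_bounded Fcs.
pose K := `|K0| + 1.
have K0K : K0 < K by rewrite /K; have := ler_norm K0; lra.
have K0' : 0 < K by rewrite /K; have := normr_ge0 K0; lra.
have HK : forall z, F z != 0 -> `|z| <= K.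
  move=> z Fz; apply: (HK0 K K0K z); apply: subset_closure; exact: Fz.
have FM : forall z, F z <= F 0.
  move=> z; have [->|z0] := eqVneq z 0; first by [].
  by apply: Fmono; rewrite normr0 normr_gt0.
pose M := F 0.
have M0 : 0 <= M := Fge0 0.
exists (8 * M * K), 1%N => n n1 mu hmu.
have n0 : 0 < n%:R :> R by rewrite ltr0n.
pose a := K / n%:R.
have a0 : 0 < a by rewrite /a divr_gt0.
have hmu' : -2 < mu < 2 by rewrite -ltr_norml.
pose cv := Num.sqrt (1 - (mu / 2) ^+ 2).
have cv0 : 0 < cv := sqrt_pos mu hmu'.
have cv2 : cv ^+ 2 = 1 - (mu / 2) ^+ 2 := sqr_sq mu hmu'.
have cv1 : cv <= 1.
  have h : 0 <= (mu / 2) ^+ 2 by rewrite sqr_ge0.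
  nra.
pose g := Num.min (cv / 2) (3 * cv ^+ 2 / (4 * a)).
have g0 : 0 < g by rewrite lt_min; apply/andP; split; [lra | apply: divr_gt0; [nra|lra]].
have g1 : g <= cv / 2 by rewrite ge_min lexx.
pose l := Num.sqrt (1 - g ^+ 2).
have l2 : l ^+ 2 = 1 - g ^+ 2 by rewrite sqr_sqrtr // subr_ge0; nra.
have l0 : 0 <= l := sqrtr_ge0 _.
have l1 : l < 1 by nra.
have pi0 := pi_gt0 R.
have hAl : -(pi/2) < asin l < pi/2.
  by apply/andP; split; [apply: asin_gtNpi2 | apply: asin_ltpi2]; apply/andP; split; lra.
have hAnl : -(pi/2) < asin (- l) < pi/2.
  by apply/andP; split; [apply: asin_gtNpi2 | apply: asin_ltpi2]; apply/andP; split; lra.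
pose phi := asin (mu / 2).
have hphi : -(pi/2) < phi < pi/2.
  move: hmu' => /andP[m1 m2].
  by apply/andP; split; [apply: asin_gtNpi2 | apply: asin_ltpi2]; apply/andP; split; lra.
pose b1 := Num.max (asin (- l)) (phi - 2 * a).
pose b2 := Num.min (asin l) (phi + 2 * a).
have hb1 : -(pi/2) < b1 < pi/2.
  apply/andP; split; first by rewrite lt_max; apply/orP; left; case/andP: hAnl.
  by rewrite gt_max; apply/andP; split; [case/andP: hAnl | case/andP: hphi => _; lra].
have hb2 : -(pi/2) < b2 < pi/2.
  apply/andP; split; last by rewrite gt_min; apply/orP; left; case/andP: hAl.
  by rewrite lt_min; apply/andP; split; [case/andP: hAl | case/andP: hphi => ? _; lra].
pose p := 2 * sin b1.
pose q := 2 * sin b2.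
have hp : -2 < p < 2 by have := sin_bounds b1 hb1; rewrite /p; case/andP => ? ?; apply/andP; split; lra.
have hq : -2 < q < 2 by have := sin_bounds b2 hb2; rewrite /q; case/andP => ? ?; apply/andP; split; lra.
have claim : forall x, -2 < x < 2 -> F (n%:R * rho x * (x - mu)) != 0 -> p <= x <= q.
  move=> x hx Fx.
  have Hz := HK _ Fx.
  have cu0 := sqrt_pos x hx.
  have cu2 := sqr_sq x hx.
  pose cu := Num.sqrt (1 - (x / 2) ^+ 2).
  rewrite -/cu in cu0 cu2.
  have rE : rho x = cu^-1 by [].
  have icu : 0 < cu^-1 by rewrite invr_gt0.
  rewrite rE !normrM (gtr0_norm n0) (gtr0_norm icu) in Hz.
  have hw : `|x - mu| <= a * cu.
    have e : `|x - mu| = (n%:R * cu^-1 * `|x - mu|) * cu / n%:R.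
      by field; apply/andP; split; rewrite gt_eqF.
    rewrite e /a mulrAC; apply: ler_wpM2r; first exact: ltW.
    by apply: ler_wpM2r => //; rewrite invr_ge0 ltW.
  have [h1 h2] := claim_pt a mu x a0 hmu' hx hw.
  rewrite -/cv -/g -/cu in h2.
  have hxl : - l <= x / 2 <= l.
    have h4 : g * g <= cu * cu by apply: ler_pM; lra.
    have h3 : (x / 2) ^+ 2 <= l ^+ 2 by rewrite l2; move: h4; rewrite -!expr2; lra.
    have h5 : `|x / 2| <= l.
      by rewrite -sqrtr_sqr -(ger0_norm l0) -sqrtr_sqr ler_sqrt // sqr_ge0.
    by rewrite -ler_norml.
  case/andP: hxl => hxl1 hxl2.
  have hx1 : -1 <= x / 2 <= 1 by apply/andP; split; lra.
  have t1 : asin (- l) <= asin (x / 2) by apply: asin_mono; lra.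
  have t2 : asin (x / 2) <= asin l by apply: asin_mono; lra.
  move: h1; rewrite -/phi => /ler_normlP [t3 t4].
  have e : x = 2 * sin (asin (x / 2)) by rewrite asinK ?in_itv //; field.
  apply/andP; split.
    rewrite [X in _ <= X]e /p ler_pM2l //; apply: sin_le.
    - by case/andP: hb1 => ? _; lra.
    - by rewrite ge_max; apply/andP; split; lra.
    - have := asin_lepi2 hx1; lra.
  rewrite [X in X <= _]e /q ler_pM2l //; apply: sin_le.
  - have := asin_geNpi2 hx1; lra.
  - by rewrite le_min; apply/andP; split; lra.
  - by case/andP: hb2 => _ ?; lra.
have rho0 : forall x : R, 0 <= rho x by move=> x; rewrite /rho invr_ge0 sqrtr_ge0.
have gcont : forall x : R, -2 < x < 2 ->
    {for x, continuous (fun x => F (n%:R * rho x * (x - mu)) * rho x)}.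
  move=> x hx; apply: continuousM; last exact: rho_cont.
  apply: continuous_comp; last exact: Fcont.
  apply: continuousM; first by apply: continuousM; [exact: cvg_cst | exact: rho_cont].
  by apply: continuousB; [exact: cvg_id | exact: cvg_cst].
have E1 : (\int[@lebesgue_measure R]_(x in `](-2 : R)%R, (2 : R)%R[%classic)
          ((F (n%:R * rho x * (x - mu)) * rho x)%R)%:E =
          \int[@lebesgue_measure R]_(x in `[p, q]%classic)
          ((F (n%:R * rho x * (x - mu)) * rho x)%R)%:E)%E.
  rewrite integral_mkcond [RHS]integral_mkcond.
  apply: eq_integral => x _; rewrite !patchE.
  case: ifPn => xI; case: ifPn => xpq //.
  - move: xI; rewrite inE /= in_itv /= => xI.
    have [Fx|Fx] := eqVneq (F (n%:R * rho x * (x - mu))) 0; first by rewrite Fx mul0r.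
    by exfalso; move: xpq; rewrite notin_setE /= in_itv /= (claim x xI Fx).
  - move: xpq; rewrite inE /= in_itv /= => /andP[px xq].
    move: xI; rewrite notin_setE /= in_itv /=; case/andP: hp => ? _; case/andP: hq => _ ?.
    by move=> H; exfalso; apply: H; apply/andP; split; lra.
rewrite E1.
have mpq : measurable (`[p, q]%classic : set R) by exact: measurable_itv.
case/andP: hp => p2 p2'; case/andP: hq => q2 q2'.
apply: (@le_trans _ _ (\int[@lebesgue_measure R]_(x in `[p, q]%classic) ((M * rho x)%R)%:E)%E).
  apply: ge0_le_integral => //.
  - by move=> x _; rewrite lee_fin mulr_ge0.
  - by apply: cont_meas => // x hx; apply: gcont.
  - apply: cont_meas => // x hx; apply: continuousM; first exact: cvg_cst.
    exact: rho_cont.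
  - by move=> x _; rewrite lee_fin; apply: ler_wpM2r => //; apply: FM.
have [pq|qp] := ltP p q; last first.
  rewrite le_eqVlt in qp; case/orP: qp => [/eqP qp|qp].
    rewrite qp set_itv1 integral_set1 lee_fin; apply: divr_ge0 => //; nra.
  rewrite set_itv_ge ?integral_set0 ?lee_fin; first by apply: divr_ge0 => //; nra.
  by rewrite bnd_simp -ltNge.
rewrite int_rho // -EFinB lee_fin.
have eq2 : asin (q / 2) = b2.
  by rewrite /q mulrC mulKf // sinK // in_itv /=; case/andP: hb2 => ? ?; apply/andP; split; lra.
have eq1 : asin (p / 2) = b1.
  by rewrite /p mulrC mulKf // sinK // in_itv /=; case/andP: hb1 => ? ?; apply/andP; split; lra.
rewrite eq1 eq2.
have d1 : b2 <= phi + 2 * a by rewrite ge_min lexx orbT.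
have d2 : phi - 2 * a <= b1 by rewrite le_max lexx orbT.
have d3 : M * (b2 - b1) <= M * (4 * a) by apply: ler_wpM2l => //; lra.
have -> : 8 * M * K / n%:R = 2 * (M * (4 * a)) by rewrite /a; ring.
lra.
Qed.
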